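(* Let $k\ge1$, let $c\in\mathcal{S}_k^\alpha\setminus\{\mathbf{0}\}$, and let $s_i^k$ be the $i$-th row of $G_k^\alpha$, $i\in\{1,\dots,k\}$. Then, for every $i\in\{1,\dots,k\}$, $c$ is equal to $\gamma^{\nu(c)}s_i^k$ up to a permutation of coordinates.
   Context: Let $R$ be a finite commutative chain ring with maximal ideal $\langle\gamma\rangle$, nilpotency index $s$ and residue field $R/\langle\gamma\rangle\cong\mathbb{F}_q$. Fix coset representatives $T=\{e_0,\dots,e_{q-1}\}$ with $e_0=0,e_1=1$, ordered $e_0<\dots<e_{q-1}$; each $r\in R$ is uniquely $\sum_{i=0}^{s-1}r_i\gamma^i$, $r_i\in T$; order $R$ by $x>y$ iff $x_i>y_i$ in $T$ for the largest $i$ with $x_i\neq y_i$; list $R=\{\rho_0,\dots,\rho_{q^s-1}\}$ increasingly. $\mathbf{a}^{(m)}$ is the constant vector of length $m$. Define $G_1^\alpha=(\rho_0\ \cdots\ \rho_{q^s-1})$ and, for $k>1$, $G_k^\alpha$ as the $k\times q^{sk}$ matrix of $q^s$ column blocks, the $j$-th having first row $\boldsymbol{\rho_j}^{(q^{s(k-1)})}$ and $G_{k-1}^\alpha$ below. $\mathcal{S}_k^\alpha$ is the $R$-submodule of $R^{q^{sk}}$ generated by the rows of $G_k^\alpha$. Valuation: for $x\in R\setminus\{0\}$, $\nu(x)$ is the largest $m$ with $x=\gamma^m\beta$, $\beta$ a unit; $\nu(0)=\infty$; for $x\in R^n$, $\nu(x)=\min_i\nu(x_i)$. *)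

(* Defs.v *)
From mathcomp Require Import all_boot all_order all_algebra all_fingroup.
Set Implicit Arguments. Unset Strict Implicit. Unset Printing Implicit Defensive.
Import GRing.Theory.
Local Open Scope ring_scope.

Section ChainRing.
Variable R : finComUnitRingType.

Definition in_ideal (gamma x : R) : Prop := exists y : R, x = gamma * y.

(* R is a finite commutative chain ring with maximal ideal <gamma> and
   nilpotency index s: the non-units are exactly the multiples of gamma
   (i.e. R is local with principal maximal ideal <gamma>), and s is the
   least natural number with gamma^s = 0. *)
Definition chain_ring (gamma : R) (s : nat) : Prop :=
  [/\ forall x : R, x \isn't a GRing.unit <-> in_ideal gamma x,
      (0 < s)%N, gamma ^+ s = 0 & gamma ^+ s.-1 != 0].

(* T = [:: e_0; ...; e_(q-1)] (listed in the fixed order e_0 < ... < e_(q-1))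
   is a set of coset representatives of R / <gamma>, with e_0 = 0, e_1 = 1. *)
Definition coset_reps (gamma : R) (T : seq R) : Prop :=
  [/\ (1 < size T)%N, T`_0 = 0, T`_1 = 1 &
      forall r : R, exists! i : nat, (i < size T)%N /\ in_ideal gamma (r - T`_i)].

Variables (gamma : R) (s : nat) (T : seq R).

(* q^s = |R| *)
Definition Nq : nat := (size T ^ s)%N.

(* rho_j, j < q^s: the element whose gamma-adic digits (in T) are the base-q
   digits of j; digit i has weight q^i, so increasing j is exactly the order
   x > y iff x_i > y_i for the largest i with x_i <> y_i. *)
Definition rho (j : nat) : R :=
  \sum_(i < s) T`_((j %/ (size T ^ i)) %% size T) * gamma ^+ i.

(* Entry (row i, column m), 0-indexed, of G_k^alpha, following the recursive
   definition: column block j = m / N^(k-1) has first row rho_j and G_(k-1)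
   below (at column m mod N^(k-1)). *)
Fixpoint Gentry (k i m : nat) : R :=
  match k with
  | 0 => 0
  | k'.+1 => match i with
             | 0 => rho (m %/ (Nq ^ k'))
             | i'.+1 => Gentry k' i' (m %% (Nq ^ k'))
             end
  end.

Definition Gmx (k : nat) : 'M[R]_(k, Nq ^ k) := \matrix_(i < k, m < Nq ^ k) Gentry k i m.

Definition in_Sk (k : nat) (c : 'rV[R]_(Nq ^ k)) : Prop :=
  exists a : 'rV[R]_k, c = a *m Gmx k.

(* valuation of a nonzero element: largest m with x = gamma^m * beta, beta unit
   (necessarily m < s since gamma^s = 0); nu 0 = s stands for infinity. *)
Definition nu (x : R) : nat :=
  if x == 0 then s else
  \max_(m < s | [exists b : R, (b \is a GRing.unit) && (x == gamma ^+ m * b)]) m.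

Definition nu_vec (n : nat) (c : 'rV[R]_n) : nat := \big[minn/s]_(j < n) nu (c 0 j).

End ChainRing.

(* Main.v *)
Require Import Defs.
From mathcomp Require Import all_boot all_order all_algebra all_fingroup.
From mathcomp Require Import zify ring.
Set Implicit Arguments. Unset Strict Implicit. Unset Printing Implicit Defensive.
Import GRing.Theory.
Local Open Scope ring_scope.

Section Aux.
Variable R : finComUnitRingType.
Variables (gamma : R) (s : nat) (T : seq R).
Hypothesis hR : chain_ring gamma s.
Hypothesis hT : coset_reps gamma T.

Lemma nonunit_ideal (x : R) : x \isn't a GRing.unit -> exists y, x = gamma * y.
Proof. by case: hR => H _ _ _; move/H. Qed.

Lemma ideal_nonunit (y : R) : gamma * y \isn't a GRing.unit.
Proof. case: hR => H _ _ _; apply/H; by exists y. Qed.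

Lemma gamma_pow_neq0 n : (n < s)%N -> gamma ^+ n != 0.
Proof.
case: hR => _ s0 _ hs1 ns; apply: contraNneq hs1 => h.
have -> : s.-1 = (n + (s.-1 - n))%N by lia.
by rewrite exprD h mul0r.
Qed.

Lemma gamma_pow_s n : (s <= n)%N -> gamma ^+ n = 0.
Proof.
case: hR => _ _ hs _ ns.
have -> : n = (s + (n - s))%N by lia.
by rewrite exprD hs mul0r.
Qed.

Lemma unit_minus (u z : R) : u \is a GRing.unit -> u - gamma * z \is a GRing.unit.
Proof.
move=> hu; apply/negPn/negP => /nonunit_ideal [w hw].
have : u = gamma * (w + z) by rewrite mulrDr -hw subrK.
by move=> e; move: hu; rewrite e (negbTE (ideal_nonunit _)).
Qed.

Lemma val_exists_aux t : forall n (y : R), (s - n)%N = t -> gamma ^+ n * y != 0 ->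
  exists m, [/\ (m < s)%N , (n <= m)%N & exists2 b, b \is a GRing.unit & gamma ^+ n * y = gamma ^+ m * b].
Proof.
elim: t => [|t IH] n y ht hne.
  by move: hne; rewrite gamma_pow_s ?mul0r ?eqxx //; lia.
case hy: (y \is a GRing.unit).
  exists n; split => //; first lia. by exists y.
have [y' ey] := nonunit_ideal (negbT hy).
have e : gamma ^+ n * y = gamma ^+ n.+1 * y' by rewrite ey mulrA -exprSr.
rewrite e in hne *.
have [|m [ms nm hb]] := IH n.+1 y' _ hne; first lia.
by exists m; split => //; lia.
Qed.

Lemma val_exists (x : R) : x != 0 ->
  exists m, (m < s)%N /\ exists2 b, b \is a GRing.unit & x = gamma ^+ m * b.
Proof.
move=> hx; have [|m [ms _ hb]] := @val_exists_aux (s - 0) 0 x erefl; first by rewrite mul1r.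
by exists m; split => //; rewrite -[x]mul1r.
Qed.

Lemma nu_spec (x : R) : x != 0 ->
  (nu gamma s x < s)%N /\ exists2 b, b \is a GRing.unit & x = gamma ^+ (nu gamma s x) * b.
Proof.
move=> hx; rewrite /nu (negbTE hx).
set P := fun m : 'I_s => [exists b, (b \is a GRing.unit) && (x == gamma ^+ m * b)].
have [m0 [m0s [b0 ub0 eb0]]] := val_exists hx.
have Pm0 : P (Ordinal m0s) by apply/existsP; exists b0; rewrite ub0 eb0 eqxx.
have hle := @leq_bigmax_cond _ P (fun m : 'I_s => nat_of_ord m) _ Pm0.
have : (\max_(m < s | P m) m = 0)%N \/ exists m : 'I_s, (\max_(m < s | P m) m)%N = m /\ P m.
  apply: (big_ind (fun v => v = 0%N \/ exists m : 'I_s, v = m /\ P m)) => [|a b' Ha Hb|m Pm]; [by left| |by right; exists m].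
  by rewrite /maxn; case: ifP.
case=> [e|[m [e Pm]]].
  rewrite e; split; first by lia.
  move: hle; rewrite e /= leqn0 => /eqP m00.
  by exists b0 => //; rewrite eb0 m00.
rewrite e; split => //.
by move/existsP: Pm => [b /andP [ub /eqP eb]]; exists b.
Qed.

Local Notation q := (size T).

Definition rhon n j := \sum_(i < n) T`_((j %/ q ^ i) %% q) * gamma ^+ i.

Lemma q_gt1 : (1 < q)%N. Proof. by case: hT. Qed.

Lemma digit_mod n i j : (i < n)%N -> ((j %% q ^ n) %/ q ^ i %% q = (j %/ q ^ i) %% q)%N.
Proof.
move=> lt; have -> : (q ^ n = q ^ (n - i) * q ^ i)%N by rewrite -expnD subnK // ltnW.
rewrite -modn_divl modn_dvdm //.
by rewrite -(subnSK lt) expnS dvdn_mulr.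
Qed.

Lemma rhon_mod n j : rhon n (j %% q ^ n)%N = rhon n j.
Proof. by apply: eq_bigr => i _; rewrite digit_mod. Qed.

Lemma rhon_S n j : rhon n.+1 j = rhon n j + T`_((j %/ q ^ n) %% q) * gamma ^+ n.
Proof. by rewrite /rhon big_ord_recr. Qed.

Lemma rho_surj_aux n (r : R) : exists j, (j < q ^ n)%N /\ exists y, r - rhon n j = gamma ^+ n * y.
Proof.
elim: n => [|n [j [jlt [y ey]]]].
  by exists 0%N; split => //; exists r; rewrite /rhon big_ord0 subr0 mul1r.
case: hT => _ _ _ /(_ y) [d [[dlt [z ez]] _]].
have qn0 : (0 < q ^ n)%N by rewrite expn_gt0; have := q_gt1; lia.
exists (d * q ^ n + j)%N; split.
  rewrite expnS; have : (d * q ^ n + j < d * q ^ n + q ^ n)%N by rewrite ltn_add2l.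
  move/leq_trans; apply; rewrite -mulSnr leq_mul2r dlt orbT //.
rewrite rhon_S.
have -> : rhon n (d * q ^ n + j)%N = rhon n j.
  by rewrite -rhon_mod modnMDl modn_small.
exists z.
rewrite divnMDl // divn_small // addn0 modn_small //.
by rewrite opprD addrA ey exprSr -mulrA -ez mulrBr [_ * gamma ^+ n]mulrC.
Qed.

Lemma unit_ann n (x : R) : (n < s)%N -> gamma ^+ n * x = 0 -> x \isn't a GRing.unit.
Proof.
move=> ns e; apply/negP => ux; move: (gamma_pow_neq0 ns).
by rewrite -(mulrK ux (gamma ^+ n)) e mul0r eqxx.
Qed.

Lemma coset_uniq d d' : (d < q)%N -> (d' < q)%N -> (exists w, T`_d - T`_d' = gamma * w) -> d = d'.
Proof.
move=> dq dq' [w ew]; case: hT => _ _ _ /(_ T`_d) [i [_ iu]].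
rewrite -(iu d) ?(iu d') //; split => //.
- by exists w.
- by exists 0; rewrite subrr mulr0.
Qed.

Lemma rho_inj_aux n : (n <= s)%N -> forall j j', (j < q ^ n)%N -> (j' < q ^ n)%N ->
  (exists y, rhon n j - rhon n j' = gamma ^+ n * y) -> j = j'.
Proof.
elim: n => [|n IH] hn j j' lj lj' [y ey]; first by move: lj lj'; rewrite expn0; lia.
have qn0 : (0 < q ^ n)%N by rewrite expn_gt0; have := q_gt1; lia.
have dq : (j %/ q ^ n < q)%N by rewrite ltn_divLR // -expnS.
have dq' : (j' %/ q ^ n < q)%N by rewrite ltn_divLR // -expnS.
move: ey; rewrite !rhon_S -(rhon_mod n j) -(rhon_mod n j') !(modn_small dq) !(modn_small dq').
set d := (j %/ q ^ n)%N; set d' := (j' %/ q ^ n)%N => ey.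
have e0 : (j %% q ^ n = j' %% q ^ n)%N.
  apply: IH; [lia | by rewrite ltn_pmod | by rewrite ltn_pmod |].
  exists (gamma * y - (T`_d - T`_d')).
  by rewrite mulrBr mulrA -exprSr -ey; ring.
move: ey; rewrite e0 => ey.
have : gamma ^+ n * (T`_d - T`_d' - gamma * y) = 0.
  by rewrite mulrBr mulrA -exprSr -ey; ring.
move=> /(unit_ann (n:=n)) H; have {H} /nonunit_ideal [w ew] := H hn.
have edd : d = d'.
  by apply: coset_uniq => //; exists (w + y); rewrite mulrDr -ew; ring.
by rewrite (divn_eq j (q ^ n)) (divn_eq j' (q ^ n)) -/d -/d' edd e0.
Qed.

Local Notation N := (Nq s T).

Lemma N_gt0 : (0 < N)%N.
Proof. rewrite /Nq expn_gt0; have := q_gt1; lia. Qed.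

Lemma rho_surj (r : R) : exists j, (j < N)%N /\ rho gamma s T j = r.
Proof.
have [j [jl [y ey]]] := rho_surj_aux s r.
exists j; split => //.
have : r - rhon s j = 0 by rewrite ey; case: hR => _ _ -> _; rewrite mul0r.
by move/eqP; rewrite subr_eq0 => /eqP ->.
Qed.

Lemma rho_inj j j' : (j < N)%N -> (j' < N)%N -> rho gamma s T j = rho gamma s T j' -> j = j'.
Proof.
move=> lj lj' e; apply: (rho_inj_aux (leqnn s) lj lj').
exists 0; rewrite mulr0; apply/eqP; rewrite subr_eq0; exact/eqP.
Qed.

Lemma G_uniq k m m' : (m < N ^ k)%N -> (m' < N ^ k)%N ->
  (forall l, (l < k)%N -> Gentry gamma s T k l m = Gentry gamma s T k l m') -> m = m'.
Proof.
elim: k m m' => [|k IH] m m' lm lm' H; first by move: lm lm'; rewrite expn0; lia.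
have Nk0 : (0 < N ^ k)%N by rewrite expn_gt0 N_gt0.
have e1 : (m %/ N ^ k = m' %/ N ^ k)%N.
  apply: rho_inj; [by rewrite ltn_divLR // -expnS | by rewrite ltn_divLR // -expnS |].
  exact: (H 0%N).
have e2 : (m %% N ^ k = m' %% N ^ k)%N.
  apply: IH; [by rewrite ltn_pmod | by rewrite ltn_pmod |].
  by move=> l lk; exact: (H l.+1).
by rewrite (divn_eq m (N ^ k)) (divn_eq m' (N ^ k)) e1 e2.
Qed.

Lemma G_exists k (x : nat -> R) : exists m, (m < N ^ k)%N /\
  forall l, (l < k)%N -> Gentry gamma s T k l m = x l.
Proof.
elim: k x => [|k IH] x; first by exists 0%N; split => //; rewrite expn0.
have Nk0 : (0 < N ^ k)%N by rewrite expn_gt0 N_gt0.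
have [j [jl ej]] := rho_surj (x 0%N).
have [m0 [lm0 em0]] := IH (fun l => x l.+1).
exists (j * N ^ k + m0)%N; split.
  rewrite expnS; have : (j * N ^ k + m0 < j * N ^ k + N ^ k)%N by rewrite ltn_add2l.
  move/leq_trans; apply; rewrite -mulSnr leq_mul2r jl orbT //.
case=> [|l] lk /=.
  by rewrite divnMDl // divn_small // addn0.
by rewrite modnMDl modn_small // em0.
Qed.

End Aux.

Lemma bigmin_le (I : eqType) (r : seq I) (F : I -> nat) (d : nat) x :
  x \in r -> (\big[minn/d]_(j <- r) F j <= F x)%N.
Proof.
elim: r => [//|a r IH]; rewrite inE big_cons => /orP [/eqP ->|/IH h].
  exact: geq_minl.
exact: leq_trans (geq_minr _ _) h.
Qed.

Theorem proposition3p9 (R : finComUnitRingType) (gamma : R) (s : nat) (T : seq R)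
    (hR : chain_ring gamma s) (hT : coset_reps gamma T)
    (k : nat) (hk : (1 <= k)%N) (c : 'rV[R]_(Nq s T ^ k))
    (hc : @in_Sk R gamma s T k c) (hc0 : c != 0) :
  forall i : 'I_k, exists sigma : 'S_(Nq s T ^ k),
    forall j : 'I_(Nq s T ^ k),
      c 0 j = gamma ^+ (nu_vec gamma s c) * Gmx gamma s T k i (sigma j).
Proof.
move=> i; case: hc => a ca.
set G' := fun (l m : nat) => Gentry gamma s T k l m.
have cE : forall j : 'I_(Nq s T ^ k), c 0 j = \sum_(l < k) a 0 l * G' l j.
  by move=> j; rewrite ca !mxE; apply: eq_bigr => l _; rewrite mxE.
set v := nu_vec gamma s c.
have [j0 cj0] : exists j0, c 0 j0 != 0.
  case: (pickP (fun j => c 0 j != 0)) => [j0 h|h]; first by exists j0.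
  move: hc0; rewrite (_ : c = 0) ?eqxx //; apply/matrixP => i0 j; rewrite !mxE.
  by rewrite (ord1 i0); move: (h j) => /negbFE/eqP.
have vle : forall j, (v <= nu gamma s (c 0%R j))%N.
  by move=> j; rewrite /v /nu_vec; apply: bigmin_le; rewrite mem_index_enum.
have vcase : v = s \/ exists j, v = nu gamma s (c 0 j).
  rewrite /v /nu_vec; apply: (big_ind (fun x => x = s \/ exists j, x = nu gamma s (c 0 j))).
  - by left.
  - by move=> x y Hx Hy; rewrite /minn; case: ifP.
  - by move=> j _; right; exists j.
have [nus _] := nu_spec hR cj0.
have vs : (v < s)%N by apply: leq_ltn_trans (vle j0) nus.
have [j1 ej1] : exists j1, v = nu gamma s (c 0 j1).
  by case: vcase => // e; move: vs; rewrite e ltnn.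
have cj1 : c 0 j1 != 0.
  by apply: contraTneq vs => e; rewrite ej1 /nu e eqxx ltnn.
have [_ [u1 uu1 eu1]] := nu_spec hR cj1; rewrite -ej1 in eu1.
have cdiv : forall j, exists w, c 0 j = gamma ^+ v * w.
  move=> j; case: (eqVneq (c 0 j) 0) => [->|cj]; first by exists 0; rewrite mulr0.
  have [_ [b _ eb]] := nu_spec hR cj; exists (gamma ^+ (nu gamma s (c 0 j) - v) * b).
  by rewrite mulrA -exprD subnKC ?vle.
have adiv : forall l : 'I_k, exists w, a 0 l = gamma ^+ v * w.
  move=> l; have [m [lm em]] := G_exists hR hT k (fun l' => if l' == l then 1 else 0).
  have [w ew] := cdiv (Ordinal lm); exists w; rewrite -ew cE.
  rewrite (bigD1 l) //= big1 => [|l' nl]; first by rewrite /G' em // eqxx mulr1 addr0.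
  rewrite /G' em // ; have -> : (l' == l :> nat) = false by exact/negbTE.
  by rewrite mulr0.
have [b eb] := fin_all_exists adiv.
have cb : forall j, c 0 j = gamma ^+ v * \sum_l b l * G' l j.
  by move=> j; rewrite cE mulr_sumr; apply: eq_bigr => l _; rewrite eb mulrA.
have [i0 ui0] : exists i0, b i0 \is a GRing.unit.
  case: (boolP [exists l, b l \is a GRing.unit]) => [/existsP //|]; rewrite negb_exists => /forallP hb; exfalso.
  have hz : forall l, exists z, b l = gamma * z by move=> l; apply: (nonunit_ideal hR) (hb l).
  have [z ez] := fin_all_exists hz.
  have eZ : \sum_l b l * G' l j1 = gamma * \sum_l z l * G' l j1.
    by rewrite mulr_sumr; apply: eq_bigr => l _; rewrite ez mulrA.
  have : gamma ^+ v * (u1 - gamma * \sum_l z l * G' l j1) = 0.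
    by rewrite mulrBr -eu1 cb eZ subrr.
  by move/(unit_ann hR vs); rewrite (unit_minus hR) //.
set y := fun (m l : nat) => if l == i then \sum_l' b l' * G' l' m
                            else if l == i0 then G' i m else G' l m.
have fex : forall m : 'I_(Nq s T ^ k), exists m' : 'I_(Nq s T ^ k),
    forall l : 'I_k, G' l m' = y m l.
  move=> m; have [m' [lm' em']] := G_exists hR hT k (y m).
  by exists (Ordinal lm') => l; exact: em'.
have [f ef] := fin_all_exists fex.
have finj : injective f.
  move=> m1 m2 e.
  have hy : forall l : 'I_k, y m1 l = y m2 l by move=> l; rewrite -!ef e.
  have hne : forall l : 'I_k, l != i0 -> G' l m1 = G' l m2.
    move=> l nl; case: (eqVneq l i) => [eli|nli].
    - have := hy i0; rewrite /y.
      have -> : (i0 == i :> nat) = false by apply/negbTE; rewrite -eli eq_sym.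
      by rewrite eqxx eli.
    - have := hy l; rewrite /y.
      have -> : (l == i :> nat) = false by exact/negbTE.
      by have -> : (l == i0 :> nat) = false by exact/negbTE.
  have hi0 : G' i0 m1 = G' i0 m2.
    have := hy i; rewrite /y eqxx (bigD1 i0) // [X in _ = X -> _](bigD1 i0) //=.
    have -> : \sum_(l | l != i0) b l * G' l m1 = \sum_(l | l != i0) b l * G' l m2.
      by apply: eq_bigr => l nl; rewrite hne.
    by move/addIr; apply: (mulrI ui0).
  apply: val_inj; apply: (G_uniq hR hT) => [||l lk]; [exact: ltn_ord|exact: ltn_ord|].
  case: (eqVneq (Ordinal lk) i0) => [e0|n]; last exact: (hne _ n).
  by have := hi0; rewrite -e0.
exists (perm finj) => j; rewrite permE mxE.
have := ef j i; rewrite {1}/G' => ->.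
by rewrite /y eqxx cb.
Qed.
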